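(* Let $c_i:=c_i(\alpha,\beta,0)\in\mathbb{Q}[\alpha,\beta]$. Then for every integer $n$, $$(n+2)c_{n+2}+(n+1-r)\alpha c_{n+1}+(n+1-2r)\frac{\alpha^2-\beta}{4}c_n=0.$$
   Context: Fix an integer $r\ge1$ and indeterminates $\alpha,\beta,\gamma$. Define polynomials $c_n=c_n(\alpha,\beta,\gamma)\in\mathbb{Q}[\alpha,\beta,\gamma]$ by $c_n=0$ for $n<0$, $c_0=1$, and for every integer $n\ge-3$, $$(n+4)c_{n+4}+(2n+6-r)\alpha c_{n+3}+\left[(n+2-r)\alpha^2+(2n+5-2r)\frac{\alpha^2-\beta}{4}\right]c_{n+2}+\left[(2n+3-3r)\alpha\frac{\alpha^2-\beta}{4}+\frac{\gamma}{2}\right]c_{n+1}+\frac{1}{16}(\alpha^2-\beta)^2(n+1-2r)c_n=0.$$ $c_n(\alpha,\beta,0)$ denotes $c_n$ with $\gamma$ set to $0$. *)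

(* Defs.v *)
From mathcomp Require Import all_boot all_algebra.
From mathcomp Require Import mpoly.
Set Implicit Arguments. Unset Strict Implicit. Unset Printing Implicit Defensive.
Import GRing.Theory.
Local Open Scope ring_scope.

Definition P3 := {mpoly rat[3]}.
Definition alpha : P3 := 'X_(0 : 'I_3).
Definition beta  : P3 := 'X_(1 : 'I_3).
Definition gamma : P3 := 'X_(2 : 'I_3).

Definition ic (z : int) : P3 := (z%:~R : rat)%:MP.

Definition gamma0 (p : P3) : P3 :=
  comp_mpoly [tuple alpha; beta; 0] p.

Definition crec (r : nat) (c : int -> P3) (n : int) : Prop :=
  ic (n + 4) * c (n + 4)
  + ic (2 * n + 6 - r%:Z) * alpha * c (n + 3)
  + (ic (n + 2 - r%:Z) * alpha ^+ 2
     + ic (2 * n + 5 - 2 * r%:Z) * ((4^-1 : rat)%:MP * (alpha ^+ 2 - beta))) * c (n + 2)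
  + (ic (2 * n + 3 - 3 * r%:Z) * alpha * ((4^-1 : rat)%:MP * (alpha ^+ 2 - beta))
     + (2^-1 : rat)%:MP * gamma) * c (n + 1)
  + (16^-1 : rat)%:MP * (alpha ^+ 2 - beta) ^+ 2 * ic (n + 1 - 2 * r%:Z) * c n
  = 0.

(* c is the sequence c_n of the paper: c_n = 0 for n < 0, c_0 = 1,
   and the recurrence holds for n >= -3 (this determines c uniquely) *)
Definition is_cseq (r : nat) (c : int -> P3) : Prop :=
  (forall n : int, n < 0 -> c n = 0) /\ c 0 = 1 /\
  (forall n : int, -3 <= n -> crec r c n).

(* Main.v *)
Require Import Defs.
From mathcomp Require Import all_boot all_algebra.
From mathcomp Require Import mpoly.
From mathcomp Require Import ring zify.
Import GRing.Theory Num.Theory.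
Import order.Order.TTheory.
Local Open Scope ring_scope.

Lemma icE z : ic z = z%:~R.
Proof. by rewrite /ic rmorph_int. Qed.

Lemma g0C c : gamma0 c%:MP = c%:MP.
Proof. exact: comp_mpolyC. Qed.
Lemma g0a : gamma0 alpha = alpha.
Proof. by rewrite /gamma0 /alpha comp_mpolyXU. Qed.
Lemma g0b : gamma0 beta = beta.
Proof. by rewrite /gamma0 /beta comp_mpolyXU. Qed.
Lemma g0g : gamma0 gamma = 0.
Proof. by rewrite /gamma0 /gamma comp_mpolyXU. Qed.
Lemma g0ic z : gamma0 (ic z) = ic z.
Proof. exact: comp_mpolyC. Qed.

Lemma g0D x y : gamma0 (x + y) = gamma0 x + gamma0 y. Proof. exact: rmorphD. Qed.
Lemma g0B x y : gamma0 (x - y) = gamma0 x - gamma0 y. Proof. exact: rmorphB. Qed.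
Lemma g0M x y : gamma0 (x * y) = gamma0 x * gamma0 y. Proof. exact: rmorphM. Qed.
Lemma g0X x k : gamma0 (x ^+ k) = gamma0 x ^+ k. Proof. exact: rmorphXn. Qed.
Lemma g0N x : gamma0 (- x) = - gamma0 x. Proof. exact: rmorphN. Qed.
Lemma g00 : gamma0 0 = 0. Proof. exact: rmorph0. Qed.

Lemma algR (R : comRingType) (n r : int) (a q e0 e1 e2 e3 e4 : R) :
  (n + 4)%:~R * e4 + (n + 3 - r)%:~R * a * e3 +
  (n + 3 - 2 * r)%:~R * q * e2 +
  a *
  ((n + 3)%:~R * e3 + (n + 2 - r)%:~R * a * e2 +
   (n + 2 - 2 * r)%:~R * q * e1) +
  q *
  ((n + 2)%:~R * e2 + (n + 1 - r)%:~R * a * e1 +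
   (n + 1 - 2 * r)%:~R * q * e0) =
  (n + 4)%:~R * e4 + (2 * n + 6 - r)%:~R * a * e3 +
  ((n + 2 - r)%:~R * a ^+ 2 + (2 * n + 5 - 2 * r)%:~R * q) * e2 +
  (2 * n + 3 - 3 * r)%:~R * a * q * e1 +
  q ^+ 2 * (n + 1 - 2 * r)%:~R * e0.
Proof. ring. Qed.

Lemma q2 : (16^-1 : rat)%:MP * (alpha ^+ 2 - beta) ^+ 2
  = ((4^-1 : rat)%:MP * (alpha ^+ 2 - beta)) ^+ 2 :> P3.
Proof.
by rewrite exprMn -rmorphXn /=.
Qed.

Theorem proposition3p4 (r : nat) (c : int -> P3) :
  (1 <= r)%N -> is_cseq r c ->
  forall n : int,
    ic (n + 2) * gamma0 (c (n + 2))
    + ic (n + 1 - r%:Z) * alpha * gamma0 (c (n + 1))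
    + ic (n + 1 - 2 * r%:Z) * ((4^-1 : rat)%:MP * (alpha ^+ 2 - beta)) * gamma0 (c n)
    = 0.
Proof.
move=> _ [cneg [c0 crc]].
set q : P3 := (4^-1 : rat)%:MP * (alpha ^+ 2 - beta).
pose d n := gamma0 (c n).
pose L (n : int) := ic (n + 2) * d (n + 2) + ic (n + 1 - r%:Z) * alpha * d (n + 1)
    + ic (n + 1 - 2 * r%:Z) * q * d n.
have dneg n : n < 0 -> d n = 0 by move=> /cneg; rewrite /d => ->; rewrite g00.
have R n : -3 <= n -> L (n + 2) + alpha * L (n + 1) + q * L n = 0.
  move=> /crc; rewrite /crec => /(congr1 gamma0).
  rewrite g00 => <-.
  rewrite !(g0B, g0D, g0M, g0X, g0N) !g0ic g0a g0b g0g !g0C q2 -/q.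
  rewrite /L -/(d _) -/(d _) -/(d _) -/(d _) -/(d _).
  have -> : n + 2 + 2 = n + 4 by rewrite -addrA.
  have -> : n + 2 + 1 = n + 3 by rewrite -addrA.
  have -> : n + 1 + 2 = n + 3 by rewrite -addrA.
  have -> : n + 1 + 1 = n + 2 by rewrite -addrA.
  rewrite !icE mulr0 addr0; exact: algR.
have Lneg n : n <= -3 -> L n = 0.
  move=> hn; rewrite /L !dneg ?mulr0 ?addr0 //; lia.
have Lm2 : L (-2) = 0.
  by rewrite /L (dneg (-2 + 1)) // (dneg (-2)) // !mulr0 !addr0 icE mul0r.
have key k : L (k%:Z - 3) = 0 /\ L (k%:Z - 2) = 0.
  elim: k => [|k [IH1 IH2]]; first by split; [apply: Lneg | ].
  split; first by have -> : (k.+1)%:Z - 3 = k%:Z - 2 by lia.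
  have := R (k%:Z - 3).
  have -> : k%:Z - 3 + 2 = k.+1%:Z - 2 by lia.
  have -> : k%:Z - 3 + 1 = k%:Z - 2 by lia.
  rewrite IH1 IH2 !mulr0 !addr0; apply; lia.
move=> n; rewrite -/q -/(d _) -/(d _) -/(d _) -/(L n).
case: (lerP n (-3)) => [/Lneg //|hn].
have [k hkE] : exists k : nat, n + 3 = k%:Z.
  by exists (absz (n + 3)); lia.
have -> : n = k%:Z - 3 by lia.
by case: (key k).
Qed.
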